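(* Let $n \in \mathbb{N}$, let $A = \begin{pmatrix} B & C \\ C^T & D\end{pmatrix} \in \mathcal{M}_{2n}(\mathbb{R})$ be symmetric positive definite with $B,C,D \in \mathcal{M}_n(\mathbb{R})$, and let $M := \tfrac{1}{2}(B + D - i(C - C^T))$ and $N := \tfrac{1}{2}(B - D + i(C + C^T))$. Then the matrix $\begin{pmatrix} M & N \\ \overline{N} & \overline{M}\end{pmatrix} \in \mathcal{M}_{2n}(\mathbb{C})$ is Hermitian and has the same eigenvalues (with multiplicities) as $A$. Moreover $M$ and $M - N\overline{M}^{-1}\overline{N}$ are Hermitian positive definite and, for $k = 1,\dots,n$, $$\lambda_k(A) \le \lambda_k(M) \le \lambda_{k+n}(A), \qquad \lambda_k(A) \le \lambda_k\big(M - N\overline{M}^{-1}\overline{N}\big) \le \lambda_{k+n}(A).$$ In particular, the condition numbers (ratio of largest to smallest eigenvalue) of $M$ and of $M - N\overline{M}^{-1}\overline{N}$ are at most that of $A$.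
   Context: For a Hermitian matrix $H$ of size $m$, $\lambda_1(H) \le \dots \le \lambda_m(H)$ denote its eigenvalues in increasing order (with multiplicity). Bars denote entrywise complex conjugation; $(\cdot)^T$ is transpose. *)

(* Defs.v *)
(* The complex field is modelled by an arbitrary
   numClosedFieldType C (e.g. algebraic complex numbers, or C itself);
   "real" means x \is Num.real, conjugation is Num.conj. *)
From HB Require Import structures.
From mathcomp Require Import all_boot all_order all_algebra.
Set Implicit Arguments. Unset Strict Implicit. Unset Printing Implicit Defensive.
Import Order.TTheory GRing.Theory Num.Theory.
Local Open Scope ring_scope.

Section Defs.
Variable C : numClosedFieldType.

Definition mxconj m n (A : 'M[C]_(m, n)) : 'M[C]_(m, n) := map_mx Num.conj A.

Definition adjmx m n (A : 'M[C]_(m, n)) : 'M[C]_(n, m) := (mxconj A)^T.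

Definition is_hermitian n (A : 'M[C]_n) : Prop := adjmx A = A.

Definition real_mx m n (A : 'M[C]_(m, n)) : Prop := A \is a mxOver Num.real.

Definition real_sym_posdef n (A : 'M[C]_n) : Prop :=
  [/\ real_mx A, A^T = A &
      forall v : 'cV[C]_n, real_mx v -> v != 0 -> 0 < (v^T *m A *m v) 0 0].

Definition herm_posdef n (A : 'M[C]_n) : Prop :=
  is_hermitian A /\
  forall v : 'cV[C]_n, v != 0 -> 0 < (adjmx v *m A *m v) 0 0.

(* the eigenvalues of A (roots of the characteristic polynomial, with
   multiplicity), sorted increasingly: eigs A = [:: lambda_1; ...; lambda_n].
   lambda_k(A) is (eigs A)`_(k-1). (For Hermitian A all of them are real, so the
   sort is with respect to a total order.) *)
Definition eigs n (A : 'M[C]_n) : seq C :=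
  sort <=%R (sval (closed_field_poly_normal (char_poly A))).

(* lambda_{k+1}(A), 0-indexed *)
Definition eig n (A : 'M[C]_n) (k : nat) : C := (eigs A)`_k.

Definition cond n (A : 'M[C]_n) : C := eig A n.-1 / eig A 0.

End Defs.

(* Main.v *)
Require Import Defs.
From HB Require Import structures.
From mathcomp Require Import all_boot all_order all_algebra.
From mathcomp Require Import zify ring.
Set Implicit Arguments. Unset Strict Implicit. Unset Printing Implicit Defensive.
Import Order.TTheory GRing.Theory Num.Theory.
Local Open Scope ring_scope.

Section S.
Variable C : numClosedFieldType.

Lemma char_poly_sim p (X U V : 'M[C]_p) : U *m V = 1%:M ->
  char_poly (V *m X *m U) = char_poly X.
Proof.
move=> UV.
have VU : V *m U = 1%:M by apply: mulmx1C.
rewrite /char_poly.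
have -> : char_poly_mx (V *m X *m U) =
   map_mx polyC V *m char_poly_mx X *m map_mx polyC U.
  rewrite /char_poly_mx mulmxBr mulmxBl.
  rewrite !map_mxM; congr (_ - _).
  by rewrite scalar_mxC -mulmxA -map_mxM VU map_mx1 mulmx1.
rewrite !det_mulmx mulrC mulrA -det_mulmx -map_mxM UV map_mx1 det1 mul1r.
by [].
Qed.

Lemma prod_XsubC_perm (r s : seq C) :
  \prod_(z <- r) ('X - z%:P) = \prod_(z <- s) ('X - z%:P) -> perm_eq r s.
Proof.
elim: r s => [|x r IH] s /=.
  rewrite big_nil => /(congr1 (size : {poly C} -> nat)).
  rewrite size_poly1 size_prod_XsubC; case: s => //.
rewrite big_cons => E.
have xs : x \in s.
  have : root (\prod_(z <- s) ('X - z%:P)) x.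
    by rewrite -E rootM root_XsubC eqxx.
  by rewrite root_prod_XsubC.
idtac.
rewrite (permPr (perm_to_rem xs)) perm_cons; apply: IH.
move: E; rewrite (perm_big _ (perm_to_rem xs)) big_cons.
by move/mulfI; apply; rewrite polyXsubC_eq0.
Qed.

Lemma adjmxE m n (A : 'M[C]_(m,n)) : adjmx A = (A ^t Num.conj)%sesqui.
Proof. by rewrite /adjmx /mxconj map_trmx. Qed.

Lemma spec_decomp p (X : 'M[C]_p) : is_hermitian X ->
  exists P (d : 'rV[C]_p), [/\ P *m adjmx P = 1%:M, adjmx P *m P = 1%:M,
     X = adjmx P *m diag_mx d *m P & forall i, d 0 i \is Num.real].
Proof.
move=> hX.
have hX' : X \is hermsymmx.
  by apply/is_hermitianmxP; rewrite expr0 scale1r -adjmxE hX.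
have /orthomx_spectralP E := hermitian_normalmx hX'.
have U := spectral_unitarymx X.
have PP : spectralmx X *m adjmx (spectralmx X) = 1%:M.
  by rewrite adjmxE; apply/unitarymxP.
exists (spectralmx X), (spectral_diag X); split => //.
- exact: mulmx1C.
- by rewrite {1}E invmx_unitary // -adjmxE.
- move=> i; exact: (mxOverP (hermitian_spectral_diag_real hX')).
Qed.

Lemma eigs_perm p (X P : 'M[C]_p) (d : 'rV[C]_p) :
  P *m adjmx P = 1%:M -> X = adjmx P *m diag_mx d *m P ->
  perm_eq (eigs X) [seq d 0 i | i <- enum 'I_p].
Proof.
move=> PP E.
rewrite /eigs perm_sort.
case: closed_field_poly_normal => r /= Hr.
apply: prod_XsubC_perm.
move: Hr; rewrite (monicP (char_poly_monic X)) scale1r => <-.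
rewrite E char_poly_sim // char_poly_trig ?diag_mx_is_trig //.
rewrite big_map big_enum /=.
by apply: eq_bigr => i _; rewrite mxE eqxx mulr1n.
Qed.

Lemma cnt_enum (T : Type) p (f : 'I_p -> T) (a : pred T) :
  count a [seq f i | i <- enum 'I_p] = #|[set i | a (f i)]|.
Proof.
rewrite count_map cardE /enum_mem size_filter.
rewrite /enum_mem -enumT /= count_filter; apply: eq_count => i; rewrite !inE /= andbT.
by [].
Qed.

Lemma sorted_cnt_ge (L : seq C) k : sorted <=%R L -> (k < size L)%N ->
  (size L - k <= count (fun x => (L`_k <= x)%R) L)%N.
Proof.
move=> sL kL.
rewrite -[X in count _ X](cat_take_drop k L) count_cat.
have -> : count (fun x => L`_k <= x) (drop k L) = size (drop k L).
  apply/eqP; rewrite -all_count; apply/(all_nthP 0) => i.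
  rewrite size_drop => iL; rewrite nth_drop.
  apply: (sorted_leq_nth le_trans lexx) => //; rewrite /= ?inE ?leq_addr // -ltn_subRL; exact: iL.
by rewrite size_drop leq_addl.
Qed.
Lemma sorted_cnt_le (L : seq C) k : sorted <=%R L -> (k < size L)%N ->
  (k.+1 <= count (fun x => (x <= L`_k)%R) L)%N.
Proof.
move=> sL kL.
rewrite -[X in count _ X](cat_take_drop k.+1 L) count_cat.
have -> : count (fun x => x <= L`_k) (take k.+1 L) = size (take k.+1 L).
  apply/eqP; rewrite -all_count; apply/(all_nthP 0) => i.
  rewrite (size_takel kL) => iL; rewrite nth_take //.
  apply: (sorted_leq_nth le_trans lexx) => //; rewrite /= ?inE; exact: leq_trans iL kL.
by apply: leq_trans (leq_addr _ _); rewrite size_take; case: ifP => // _; exact: kL.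
Qed.

Lemma adjmxM m n r (A : 'M[C]_(m,n)) (B : 'M[C]_(n,r)) :
  adjmx (A *m B) = adjmx B *m adjmx A.
Proof. by rewrite /adjmx /mxconj map_mxM trmx_mul. Qed.

Lemma adjmxK m n (A : 'M[C]_(m,n)) : adjmx (adjmx A) = A.
Proof. by apply/matrixP => i j; rewrite !mxE conjCK. Qed.

Lemma adjmxD m n (A B : 'M[C]_(m,n)) : adjmx (A + B) = adjmx A + adjmx B.
Proof. by apply/matrixP => i j; rewrite !mxE rmorphD. Qed.

Lemma adjmxZ m n a (A : 'M[C]_(m,n)) : adjmx (a *: A) = a^* *: adjmx A.
Proof. by apply/matrixP => i j; rewrite !mxE rmorphM. Qed.

Lemma adjmxN m n (A : 'M[C]_(m,n)) : adjmx (- A) = - adjmx A.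
Proof. by apply/matrixP => i j; rewrite !mxE rmorphN. Qed.

Lemma adjmx1 m : adjmx (1%:M : 'M[C]_m) = 1%:M.
Proof. by rewrite /adjmx /mxconj map_mx1 trmx1. Qed.

Definition qf p (X : 'M[C]_p) (w : 'rV[C]_p) := (w *m X *m adjmx w) 0 0.
Definition nrm p (w : 'rV[C]_p) := (w *m adjmx w) 0 0.

Lemma nrmE p (w : 'rV[C]_p) : nrm w = \sum_i w 0 i * (w 0 i)^*.
Proof. by rewrite /nrm mxE; apply: eq_bigr => i _; rewrite !mxE. Qed.

Lemma nrm_ge0 p (w : 'rV[C]_p) : 0 <= nrm w.
Proof. by rewrite nrmE; apply: sumr_ge0 => i _; exact: mul_conjC_ge0. Qed.

Lemma nrm_gt0 p (w : 'rV[C]_p) : w != 0 -> 0 < nrm w.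
Proof.
move=> w0; rewrite lt_def nrm_ge0 andbT; apply: contra w0 => /eqP.
rewrite nrmE => /psumr_eq0P H; apply/eqP/matrixP => i j.
rewrite ord1 mxE; have := H (fun i _ => mul_conjC_ge0 _) j isT.
by move/eqP; rewrite mul_conjC_eq0 => /eqP.
Qed.

Definition Sel p (I : {set 'I_p}) : 'M[C]_(#|I|, p) :=
  \matrix_(j, i) ((enum_val j == i)%:R).

Lemma Sel_mul p (I : {set 'I_p}) (d : 'rV[C]_p) :
  Sel I *m diag_mx d *m adjmx (Sel I) = diag_mx (\row_j d 0 (enum_val j)).
Proof.
apply/matrixP => j j'; rewrite !mxE.
rewrite (bigD1 (enum_val j')) //= big1 => [|i /negPf ne]; last first.
  by rewrite !mxE eq_sym ne rmorph0 mulr0.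
rewrite !mxE eqxx rmorph1 mulr1 addr0.
rewrite (bigD1 (enum_val j')) //= big1 => [|i /negPf ne]; last first.
  by rewrite !mxE ne mulr0n mulr0.
rewrite !mxE eqxx mulr1n addr0 (inj_eq enum_val_inj) eq_sym.
by case: eqP => [->|_]; rewrite ?mulr1n ?mulr0n ?mul1r ?mul0r.
Qed.

Lemma Sel_adj p (I : {set 'I_p}) : Sel I *m adjmx (Sel I) = 1%:M :> 'M[C]_#|I|.
Proof.
have := Sel_mul I (const_mx 1).
have -> : diag_mx (const_mx 1) = 1%:M :> 'M[C]_p.
  by apply/matrixP => i j; rewrite !mxE.
rewrite mulmx1 => ->.
by apply/matrixP => i j; rewrite !mxE.
Qed.

Lemma form_Sel p (X P : 'M[C]_p) (d : 'rV[C]_p) (I : {set 'I_p}) (y : 'rV[C]_#|I|) :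
  P *m adjmx P = 1%:M -> X = adjmx P *m diag_mx d *m P ->
  qf X (y *m (Sel I *m P)) = \sum_j d 0 (enum_val j) * (y 0 j * (y 0 j)^*) /\
  nrm (y *m (Sel I *m P)) = nrm y.
Proof.
move=> PP XE; split.
  rewrite /qf !adjmxM XE !mulmxA.
  have -> : y *m Sel I *m P *m adjmx P = y *m Sel I by rewrite -mulmxA PP mulmx1.
  rewrite -[y *m Sel I *m diag_mx d *m P *m adjmx P]mulmxA PP mulmx1.
  rewrite -[y *m Sel I *m diag_mx d]mulmxA -[y *m (Sel I *m diag_mx d) *m adjmx (Sel I)]mulmxA.
  rewrite Sel_mul mul_mx_diag mxE; apply: eq_bigr => j _; rewrite !mxE.
  by rewrite mulrAC mulrC.
rewrite /nrm /= !adjmxM !mulmxA -[y *m Sel I *m P *m adjmx P]mulmxA PP mulmx1.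
by rewrite -[y *m Sel I *m adjmx (Sel I)]mulmxA Sel_adj mulmx1.
Qed.

Lemma rank_SelP p (P : 'M[C]_p) (I : {set 'I_p}) :
  P *m adjmx P = 1%:M -> \rank (Sel I *m P) = #|I|.
Proof.
move=> PP; apply: mxrank_unitary; apply/unitarymxP; rewrite -adjmxE.
by rewrite adjmxM mulmxA -[Sel I *m P *m adjmx P]mulmxA PP mulmx1 Sel_adj.
Qed.

Lemma cap_ex m1 m2 p (W : 'M[C]_(m1,p)) (V : 'M[C]_(m2,p)) :
  (p < \rank W + \rank V)%N ->
  exists2 w : 'rV[C]_p, w != 0 & (w <= W)%MS && (w <= V)%MS.
Proof.
move=> H.
have : (W :&: V)%MS != 0.
  rewrite -mxrank_eq0; apply/eqP => H0.
  move: (mxrank_sum_cap W V); rewrite H0 addn0 => E.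
  have := rank_leq_col (W + V)%MS; rewrite E; lia.
case/rowV0Pn => w wsub w0; exists w => //.
by rewrite -sub_capmx.
Qed.

Lemma eigs_props p (X : 'M[C]_p) : is_hermitian X ->
  [/\ all (fun x => x \is Num.real) (eigs X), size (eigs X) = p &
      sorted <=%R (eigs X)].
Proof.
move=> hX; have [P [d [PP _ XE dr]]] := spec_decomp hX.
have Hp := eigs_perm PP XE.
have ar : all (fun x => x \is Num.real) (eigs X).
  rewrite (perm_all _ Hp); apply/allP => x /mapP [i _ ->]; exact: dr.
split => //; first by rewrite (perm_size Hp) size_map size_enum_ord.
move: ar; rewrite /eigs; case: closed_field_poly_normal => r _ /=.
rewrite all_sort => ar; apply: (sort_sorted_in (P := fun x => x \is Num.real)) => //.
by move=> x y xr yr; apply: real_leVge.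
Qed.

Lemma sel_ge p (X P : 'M[C]_p) (d : 'rV[C]_p) (I : {set 'I_p}) a w :
  P *m adjmx P = 1%:M -> X = adjmx P *m diag_mx d *m P ->
  (forall i, i \in I -> a <= d 0 i) -> (w <= Sel I *m P)%MS ->
  a * nrm w <= qf X w.
Proof.
move=> PP XE Ha /submxP [y ->].
have [-> ->] := form_Sel y PP XE.
rewrite nrmE mulr_sumr; apply: ler_sum => j _.
by apply: ler_wpM2r; [exact: mul_conjC_ge0 | apply: Ha; exact: enum_valP].
Qed.

Lemma sel_le p (X P : 'M[C]_p) (d : 'rV[C]_p) (I : {set 'I_p}) a w :
  P *m adjmx P = 1%:M -> X = adjmx P *m diag_mx d *m P ->
  (forall i, i \in I -> d 0 i <= a) -> (w <= Sel I *m P)%MS ->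
  qf X w <= a * nrm w.
Proof.
move=> PP XE Ha /submxP [y ->].
have [-> ->] := form_Sel y PP XE.
rewrite nrmE mulr_sumr; apply: ler_sum => j _.
by apply: ler_wpM2r; [exact: mul_conjC_ge0 | apply: Ha; exact: enum_valP].
Qed.

Lemma eig_up p (X : 'M[C]_p) k m (W : 'M[C]_(m,p)) c :
  is_hermitian X -> (k < p)%N -> (k.+1 <= \rank W)%N ->
  (forall w, (w <= W)%MS -> qf X w <= c * nrm w) -> eig X k <= c.
Proof.
move=> hX kp rW Hw.
have [P [d [PP _ XE dr]]] := spec_decomp hX.
have Hp := eigs_perm PP XE.
have [ar sz so] := eigs_props hX.
pose I := [set i | eig X k <= d 0 i].
have cI : (p - k <= #|I|)%N.
  rewrite /I -(cnt_enum (fun i => d 0 i) (fun x => eig X k <= x)) -(permP Hp).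
  by rewrite -{1}sz; apply: sorted_cnt_ge => //; rewrite sz.
have hr : (p < \rank W + \rank (Sel I *m P))%N.
  rewrite rank_SelP //; apply: leq_trans (leq_add rW cI); by rewrite addSn ltnS subnKC // ltnW.
have [w w0 /andP [wW wE]] := cap_ex hr.
have Ha : forall i, i \in I -> eig X k <= d 0 i by move=> i; rewrite inE.
have H1 := sel_ge PP XE Ha wE.
have H2 := Hw w wW.
by rewrite -(ler_pM2r (nrm_gt0 w0)); exact: le_trans H1 H2.
Qed.

Lemma eig_low p (X : 'M[C]_p) k m (W : 'M[C]_(m,p)) c :
  is_hermitian X -> (k < p)%N -> (p - k <= \rank W)%N ->
  (forall w, (w <= W)%MS -> c * nrm w <= qf X w) -> c <= eig X k.
Proof.
move=> hX kp rW Hw.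
have [P [d [PP _ XE dr]]] := spec_decomp hX.
have Hp := eigs_perm PP XE.
have [ar sz so] := eigs_props hX.
pose I := [set i | d 0 i <= eig X k].
have cI : (k.+1 <= #|I|)%N.
  rewrite /I -(cnt_enum (fun i => d 0 i) (fun x => x <= eig X k)) -(permP Hp).
  by apply: sorted_cnt_le => //; rewrite sz.
have hr : (p < \rank W + \rank (Sel I *m P))%N.
  rewrite rank_SelP //; apply: leq_trans (leq_add rW cI); by rewrite addnS ltnS subnK // ltnW.
have [w w0 /andP [wW wE]] := cap_ex hr.
have Ha : forall i, i \in I -> d 0 i <= eig X k by move=> i; rewrite inE.
have H1 := sel_le PP XE Ha wE.
have H2 := Hw w wW.
by rewrite -(ler_pM2r (nrm_gt0 w0)); exact: le_trans H2 H1.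
Qed.

Lemma eig_sub_low p (X : 'M[C]_p) k : is_hermitian X -> (k < p)%N ->
  exists m, exists W : 'M[C]_(m,p), (k.+1 <= \rank W)%N /\
    forall w, (w <= W)%MS -> qf X w <= eig X k * nrm w.
Proof.
move=> hX kp.
have [P [d [PP _ XE dr]]] := spec_decomp hX.
have Hp := eigs_perm PP XE.
have [ar sz so] := eigs_props hX.
pose I := [set i | d 0 i <= eig X k].
have cI : (k.+1 <= #|I|)%N.
  rewrite /I -(cnt_enum (fun i => d 0 i) (fun x => x <= eig X k)) -(permP Hp).
  by apply: sorted_cnt_le => //; rewrite sz.
exists #|I|, (Sel I *m P); rewrite rank_SelP //; split => // w wE.
apply: sel_le PP XE _ wE => i; by rewrite inE.
Qed.

Lemma eig_sub_high p (X : 'M[C]_p) k : is_hermitian X -> (k < p)%N ->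
  exists m, exists W : 'M[C]_(m,p), (p - k <= \rank W)%N /\
    forall w, (w <= W)%MS -> eig X k * nrm w <= qf X w.
Proof.
move=> hX kp.
have [P [d [PP _ XE dr]]] := spec_decomp hX.
have Hp := eigs_perm PP XE.
have [ar sz so] := eigs_props hX.
pose I := [set i | eig X k <= d 0 i].
have cI : (p - k <= #|I|)%N.
  rewrite /I -(cnt_enum (fun i => d 0 i) (fun x => eig X k <= x)) -(permP Hp).
  by rewrite -{1}sz; apply: sorted_cnt_ge => //; rewrite sz.
exists #|I|, (Sel I *m P); rewrite rank_SelP //; split => // w wE.
apply: sel_ge PP XE _ wE => i; by rewrite inE.
Qed.

Lemma eigs_pos p (X : 'M[C]_p) : is_hermitian X ->
  (forall w : 'rV[C]_p, w != 0 -> 0 < qf X w) ->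
  forall k, (k < p)%N -> 0 < eig X k.
Proof.
move=> hX Hq k kp.
have [P [d [PP PP' XE dr]]] := spec_decomp hX.
have Hp := eigs_perm PP XE.
have : eig X k \in [seq d 0 i | i <- enum 'I_p].
  rewrite -(perm_mem Hp) mem_nth //; have [_ -> _] := eigs_props hX; exact: kp.
case/mapP => i _ ->.
pose y : 'rV[C]_#|[set i]| := const_mx 1.
have [Hq1 Hn1] := form_Sel y PP XE.
have ny : nrm y = 1.
  rewrite nrmE; under eq_bigr do rewrite mxE rmorph1 mulr1.
  by rewrite sumr_const card_ord cards1.
have w0 : y *m (Sel [set i] *m P) != 0.
  apply/eqP => H; move: Hn1; rewrite H ny /nrm mul0mx mxE => /eqP.
  by rewrite eq_sym oner_eq0.
have := Hq _ w0; rewrite Hq1.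
under eq_bigr => j _ do rewrite (set1P (enum_valP j)) mxE rmorph1 mulr1.
rewrite sumr_const card_ord cards1 ?mulr1 ?mulr1n.
exact: id.
Qed.

Lemma adjmx_block m1 m2 n1 n2 (a : 'M[C]_(m1,n1)) (b : 'M[C]_(m1,n2))
  (c : 'M[C]_(m2,n1)) (d : 'M[C]_(m2,n2)) :
  adjmx (block_mx a b c d) = block_mx (adjmx a) (adjmx c) (adjmx b) (adjmx d).
Proof. by rewrite /adjmx /mxconj map_block_mx tr_block_mx. Qed.

Lemma adjmx_scalar m (a : C) : adjmx (a%:M : 'M[C]_m) = (a^*)%:M.
Proof.
apply/matrixP => i j; rewrite !mxE eq_sym.
by case: eqP => _; rewrite ?mulr1n ?mulr0n ?rmorph0.
Qed.

Lemma real_conj m n (B : 'M[C]_(m,n)) : real_mx B -> forall i j, (B i j)^* = B i j.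
Proof. by move=> /mxOverP rB i j; apply: conj_Creal. Qed.

Lemma mxconjZ m n a (A : 'M[C]_(m,n)) : mxconj (a *: A) = a^* *: mxconj A.
Proof. by apply/matrixP => i j; rewrite !mxE rmorphM. Qed.
Lemma mxconjD m n (A B : 'M[C]_(m,n)) : mxconj (A + B) = mxconj A + mxconj B.
Proof. by apply/matrixP => i j; rewrite !mxE rmorphD. Qed.
Lemma mxconjB m n (A B : 'M[C]_(m,n)) : mxconj (A - B) = mxconj A - mxconj B.
Proof. by apply/matrixP => i j; rewrite !mxE rmorphB. Qed.
Lemma mxconjN m n (A : 'M[C]_(m,n)) : mxconj (- A) = - mxconj A.
Proof. by apply/matrixP => i j; rewrite !mxE rmorphN. Qed.
Lemma mxconjT m n (A : 'M[C]_(m,n)) : mxconj A^T = (mxconj A)^T.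
Proof. by apply/matrixP => i j; rewrite !mxE. Qed.
Lemma mxconj_real m n (A : 'M[C]_(m,n)) : real_mx A -> mxconj A = A.
Proof. by move=> rA; apply/matrixP => i j; rewrite !mxE real_conj. Qed.
Lemma conj_half : (2^-1 : C)^* = 2^-1.
Proof. by apply: conj_Creal; rewrite rpredV ?rpredD ?real1. Qed.

Definition Tm n : 'M[C]_(n + n) := block_mx 1%:M ('i%:M) 1%:M (- 'i%:M).

Lemma Hrep n (B Cm D : 'M[C]_n) : real_mx B -> real_mx Cm -> real_mx D ->
  B^T = B -> D^T = D ->
  let M := 2^-1 *: (B + D - 'i *: (Cm - Cm^T)) in
  let N := 2^-1 *: (B - D + 'i *: (Cm + Cm^T)) in
  block_mx M N (mxconj N) (mxconj M) =
    2^-1 *: (Tm n *m block_mx B Cm Cm^T D *m adjmx (Tm n)).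
Proof.
move=> rB rC rD sB sD M N.
have Hi : 'i * 'i = -1 :> C by rewrite -expr2 sqrCi.
rewrite /Tm adjmx_block adjmxN !adjmx_scalar ?conjC1 conjCi !mulmx_block scale_block_mx.
rewrite ?mul1mx ?mulmx1 ?mulNmx ?mulmxN ?mul_scalar_mx ?mul_mx_scalar /M /N.
rewrite !(mxconjZ, mxconjD, mxconjB, mxconjN, mxconjT) !mxconj_real //.
have Hc := conj_half; have Hci := @conjCi C.
congr block_mx; apply/matrixP => i j; rewrite !mxE; ring: Hi Hc Hci.
Qed.

Lemma real_adj m n (x : 'M[C]_(m,n)) : real_mx x -> adjmx x = x^T.
Proof. by move=> rx; apply/matrixP => i j; rewrite !mxE real_conj. Qed.

Lemma realpd_complex p (A : 'M[C]_p) : real_mx A -> A^T = A ->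
  (forall v : 'cV[C]_p, real_mx v -> v != 0 -> 0 < (v^T *m A *m v) 0 0) ->
  forall w : 'rV[C]_p, w != 0 -> 0 < qf A w.
Proof.
move=> rA sA pA w w0.
pose x := map_mx (fun z => 'Re z) w; pose y := map_mx (fun z => 'Im z) w.
have rx : real_mx x by apply/mxOverP => i j; rewrite mxE Creal_Re.
have ry : real_mx y by apply/mxOverP => i j; rewrite mxE Creal_Im.
have rxT : real_mx x^T by apply/mxOverP => i j; rewrite !mxE Creal_Re.
have ryT : real_mx y^T by apply/mxOverP => i j; rewrite !mxE Creal_Im.
have wE : w = x + 'i *: y by apply/matrixP => i j; rewrite !mxE -Crect.
have Hi : 'i * 'i = -1 :> C by rewrite -expr2 sqrCi.
have ge0 : forall v : 'rV[C]_p, real_mx v^T -> 0 <= (v *m A *m v^T) 0 0.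
  move=> v rv; have [->|v0] := eqVneq v 0.
    by rewrite !mul0mx mxE.
  have := pA v^T rv; rewrite trmxK => H; apply: ltW; apply: H.
  by apply: contra v0 => /eqP H; rewrite -[v]trmxK H trmx0.
have T1 : (y *m A *m x^T)^T = x *m A *m y^T by rewrite !trmx_mul trmxK sA mulmxA.
have sym : (y *m A *m x^T) 0 0 = (x *m A *m y^T) 0 0.
  by have := congr1 (fun X : 'M[C]_1 => X 0 0) T1; rewrite mxE.
have E : qf A w = (x *m A *m x^T) 0 0 + (y *m A *m y^T) 0 0.
  rewrite /qf wE adjmxD adjmxZ conjCi !real_adj //.
  rewrite !mulmxDl !mulmxDr -!scalemxAl -!scalemxAr.
  move: sym; set a := x *m A *m x^T; set b := x *m A *m y^T.
  set c := y *m A *m x^T; set d := y *m A *m y^T.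
  rewrite !mxE => ->; ring: Hi.
rewrite E.
have [x0|x0] := eqVneq x 0.
  have y0 : y != 0.
    by apply: contra w0 => /eqP y0; rewrite wE x0 y0 scaler0 addr0.
  rewrite ltr_pwDr ?ge0 //.
  have := pA y^T ryT; rewrite trmxK; apply.
  by apply: contra y0 => /eqP H; rewrite -[y]trmxK H trmx0.
rewrite ltr_pwDl ?ge0 //.
have := pA x^T rxT; rewrite trmxK; apply.
by apply: contra x0 => /eqP H; rewrite -[x]trmxK H trmx0.
Qed.

Lemma adjmx_row m n1 n2 (a : 'M[C]_(m,n1)) (b : 'M[C]_(m,n2)) :
  adjmx (row_mx a b) = col_mx (adjmx a) (adjmx b).
Proof. by rewrite /adjmx /mxconj map_row_mx tr_row_mx. Qed.

Lemma nrm_row n1 n2 (w : 'rV[C]_n1) (u : 'rV[C]_n2) :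
  nrm (row_mx w u) = nrm w + nrm u.
Proof. by rewrite /nrm /= adjmx_row mul_row_col mxE. Qed.

Lemma herm_blocks n (M N Nc Mc : 'M[C]_n) : is_hermitian (block_mx M N Nc Mc) ->
  [/\ is_hermitian M, is_hermitian Mc, adjmx N = Nc & adjmx Nc = N].
Proof.
rewrite /is_hermitian adjmx_block => /eq_block_mx [h1 h2 h3 h4].
by split.
Qed.

Lemma qf_row0 n (M N Nc Mc : 'M[C]_n) (w : 'rV[C]_n) :
  qf (block_mx M N Nc Mc) (row_mx w 0) = qf M w.
Proof.
rewrite /qf /= mul_row_block !mul0mx !addr0 adjmx_row mul_row_col.
by rewrite /adjmx /mxconj map_mx0 trmx0 mulmx0 addr0.
Qed.

Lemma qf_0row n (M N Nc Mc : 'M[C]_n) (u : 'rV[C]_n) :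
  qf (block_mx M N Nc Mc) (row_mx 0 u) = qf Mc u.
Proof.
rewrite /qf /= mul_row_block !mul0mx !add0r adjmx_row mul_row_col.
by rewrite /adjmx /mxconj map_mx0 trmx0 mulmx0 add0r.
Qed.

Lemma row_mx_neq0 n1 n2 (w : 'rV[C]_n1) (u : 'rV[C]_n2) :
  w != 0 -> row_mx w u != 0.
Proof.
move=> w0; apply: contra w0 => /eqP H.
by have := congr1 lsubmx H; rewrite row_mxKl linear0 => ->.
Qed.

Lemma pd_unit n (X : 'M[C]_n) : (forall u, u != 0 -> 0 < qf X u) ->
  X \in unitmx.
Proof.
move=> Hq; rewrite -row_free_unit; apply/negPn/negP => nf.
have : kermx X != 0.
  rewrite -mxrank_eq0 mxrank_ker; move: nf; rewrite /row_free => nf.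
  have := rank_leq_row X; rewrite subn_eq0 -ltnNge => H.
  by rewrite ltn_neqAle nf.
case/rowV0Pn => u; rewrite sub_kermx => /eqP uX u0.
by have := Hq u u0; rewrite /qf uX mul0mx mxE ltxx.
Qed.

Lemma qf_schur n (M N Nc Mc : 'M[C]_n) (w : 'rV[C]_n) : Mc \in unitmx ->
  qf (block_mx M N Nc Mc) (row_mx w (w *m - (N *m invmx Mc))) =
  qf (M - N *m invmx Mc *m Nc) w.
Proof.
move=> uMc; rewrite /qf /= mul_row_block.
have -> : w *m N + w *m - (N *m invmx Mc) *m Mc = 0.
  by rewrite (mulmxN w) mulNmx mulmxA mulmxKV // subrr.
rewrite adjmx_row mul_row_col mul0mx addr0.
have E : w *m M + w *m - (N *m invmx Mc) *m Nc = w *m (M - N *m invmx Mc *m Nc).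
  by rewrite mulmxBr (mulmxN w) mulNmx !mulmxA.
by rewrite E.
Qed.

Lemma adjmx_inv n (X : 'M[C]_n) : adjmx (invmx X) = invmx (adjmx X).
Proof. by rewrite /adjmx /mxconj map_invmx trmx_inv. Qed.

Lemma schur_herm n (M N Nc Mc : 'M[C]_n) : is_hermitian (block_mx M N Nc Mc) ->
  is_hermitian (M - N *m invmx Mc *m Nc).
Proof.
case/herm_blocks => hM hMc aN aNc.
by rewrite /is_hermitian adjmxD adjmxN !adjmxM adjmx_inv hM hMc aN aNc mulmxA.
Qed.

Lemma row_mx_neq0r n1 n2 (w : 'rV[C]_n1) (u : 'rV[C]_n2) :
  u != 0 -> row_mx w u != 0.
Proof.
move=> u0; apply: contra u0 => /eqP H.
by have := congr1 rsubmx H; rewrite row_mxKr linear0 => ->.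
Qed.

Lemma qf_ge0 n (X : 'M[C]_n) : (forall u, u != 0 -> 0 < qf X u) ->
  forall u, 0 <= qf X u.
Proof.
move=> Hq u; have [->|u0] := eqVneq u 0; last exact: ltW (Hq u u0).
by rewrite /qf !mul0mx mxE.
Qed.

Lemma block_pd n (M N Nc Mc : 'M[C]_n) :
  is_hermitian (block_mx M N Nc Mc) ->
  (forall z, z != 0 -> 0 < qf (block_mx M N Nc Mc) z) ->
  let S := M - N *m invmx Mc *m Nc in
  [/\ forall w, w != 0 -> 0 < qf M w, Mc \in unitmx,
      forall w, w != 0 -> 0 < qf S w &
      forall w, qf S w <= qf M w].
Proof.
move=> hH pH S.
have pMc : forall u, u != 0 -> 0 < qf Mc u.
  by move=> u u0; rewrite -(qf_0row M N Nc); apply: pH; apply: row_mx_neq0r.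
have uMc := pd_unit pMc.
split => //.
- by move=> w w0; rewrite -(qf_row0 M N Nc Mc); apply: pH; apply: row_mx_neq0.
- by move=> w w0; rewrite /S -(qf_schur M N Nc w uMc); apply: pH; apply: row_mx_neq0.
have [_ hMc aN aNc] := herm_blocks hH.
move=> w; rewrite /S /qf /= mulmxBr mulmxBl mxE.
rewrite mxE gerDl.
have := qf_ge0 pMc (w *m N *m invmx Mc); rewrite /qf.
rewrite mulmxKV // !adjmxM adjmx_inv hMc aN !mulmxA.
by move=> h; rewrite mxE oppr_le0.
Qed.

Lemma embed0 m n (W : 'M[C]_(m,n)) :
  (\rank W <= \rank (row_mx W (0 : 'M[C]_(m,n))))%N /\
  forall z : 'rV[C]_(n + n), (z <= row_mx W (0 : 'M[C]_(m,n)))%MS ->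
    exists2 w : 'rV[C]_n, (w <= W)%MS & z = row_mx w 0.
Proof.
split.
  have E : row_mx W (0 : 'M[C]_(m,n)) *m col_mx 1%:M 0 = W.
    by rewrite mul_row_col mulmx1 mul0mx addr0.
  by rewrite -{1}E mxrankM_maxl.
move=> z /submxP [y ->]; exists (y *m W); first exact: submxMl.
by rewrite mul_mx_row mulmx0.
Qed.

Lemma embedK m n (W : 'M[C]_(m,n)) (K : 'M[C]_n) :
  (\rank W <= \rank (W *m row_mx 1%:M K))%N /\
  forall z : 'rV[C]_(n + n), (z <= W *m row_mx 1%:M K)%MS ->
    exists2 w : 'rV[C]_n, (w <= W)%MS & z = row_mx w (w *m K).
Proof.
split.
  have E : W *m row_mx 1%:M K *m col_mx 1%:M 0 = W.
    by rewrite -mulmxA mul_row_col mulmx1 mulmx0 addr0 mulmx1.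
  by rewrite -{1}E mxrankM_maxl.
move=> z /submxP [y ->]; exists (y *m W); first exact: submxMl.
by rewrite mulmxA mul_mx_row mulmx1.
Qed.

Lemma nrm_row0 n (w : 'rV[C]_n) : nrm (row_mx w (0 : 'rV[C]_n)) = nrm w.
Proof.
rewrite nrm_row -[RHS]addr0; congr (_ + _).
by rewrite nrmE big1 // => i _; rewrite mxE mul0r.
Qed.

Lemma interlace n (M N Nc Mc : 'M[C]_n) k :
  is_hermitian (block_mx M N Nc Mc) ->
  (forall z, z != 0 -> 0 < qf (block_mx M N Nc Mc) z) ->
  (k < n)%N ->
  let H := block_mx M N Nc Mc in
  let S := M - N *m invmx Mc *m Nc in
  [/\ eig H k <= eig M k, eig M k <= eig H (k + n),
      eig H k <= eig S k & eig S k <= eig H (k + n)].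
Proof.
move=> hH pH kn H S.
have [hM _ _ _] := herm_blocks hH.
have hS : is_hermitian S := schur_herm hH.
have [pM uMc pS SM] := block_pd hH pH.
have kn2 : (k < n + n)%N by apply: leq_trans kn (leq_addr _ _).
have kn3 : (k + n < n + n)%N by rewrite ltn_add2r.
have sub3 : (n + n - (k + n) = n - k)%N by rewrite subnDr.
split.
- have [m [W [rW HW]]] := eig_sub_low hM kn.
  have [rW' HW'] := embed0 W.
  apply: (eig_up (W := row_mx W 0)) => //; first exact: leq_trans rW rW'.
  move=> z /HW' [w /HW wW ->].
  by rewrite qf_row0 nrm_row0.
- have [m [W [rW HW]]] := eig_sub_high hM kn.
  have [rW' HW'] := embed0 W.
  apply: (eig_low (W := row_mx W 0)) => //; first by rewrite sub3; exact: leq_trans rW rW'.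
  move=> z /HW' [w /HW wW ->].
  by rewrite qf_row0 nrm_row0.
- have [m [W [rW HW]]] := eig_sub_low hS kn.
  have [rW' HW'] := embedK W (- (N *m invmx Mc)).
  apply: (eig_up (W := W *m row_mx 1%:M (- (N *m invmx Mc)))) => //.
    exact: leq_trans rW rW'.
  move=> z /HW' [w /HW wW ->].
  rewrite qf_schur // (le_trans wW) // nrm_row.
  rewrite ler_wpM2l ?lerDl ?nrm_ge0 //.
  by apply: ltW; apply: eigs_pos hS pS k kn.
- have [m [W [rW HW]]] := eig_sub_high hS kn.
  have [rW' HW'] := embed0 W.
  apply: (eig_low (W := row_mx W 0)) => //; first by rewrite sub3; exact: leq_trans rW rW'.
  move=> z /HW' [w /HW wW ->].
  by rewrite qf_row0 nrm_row0 (le_trans wW).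
Qed.

Lemma Tm_adj n : Tm n *m adjmx (Tm n) = 2%:M.
Proof.
have Hi : 'i * 'i = -1 :> C by rewrite -expr2 sqrCi.
rewrite /Tm adjmx_block adjmxN !adjmx_scalar ?conjC1 conjCi mulmx_block.
rewrite scalar_mx_block ?mul1mx ?mulNmx ?mul_scalar_mx.
congr block_mx; apply/matrixP => i j; rewrite !mxE;
  case: eqP => _; rewrite ?mulr1n ?mulr0n; ring: Hi.
Qed.

End S.

Unset Implicit Arguments.

Theorem mainTheorem5 (C : numClosedFieldType) (n : nat) (B Cm D : 'M[C]_n) :
  real_mx B -> real_mx Cm -> real_mx D ->
  real_sym_posdef (block_mx B Cm Cm^T D) ->
  let A := block_mx B Cm Cm^T D in
  let M := 2^-1 *: (B + D - 'i *: (Cm - Cm^T)) in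
  let N := 2^-1 *: (B - D + 'i *: (Cm + Cm^T)) in
  let S := M - N *m invmx (mxconj M) *m mxconj N in
  [/\ is_hermitian (block_mx M N (mxconj N) (mxconj M)),
      eigs (block_mx M N (mxconj N) (mxconj M)) = eigs A,
      herm_posdef M /\ herm_posdef S,
      (forall k : nat, (k < n)%N -> ((eig A k <= eig M k) && (eig M k <= eig A (k + n))) /\
                       ((eig A k <= eig S k) && (eig S k <= eig A (k + n)))) &
      cond M <= cond A /\ cond S <= cond A].
Proof.
move=> rB rC rD [rA sA pA] A M N S.
have /eq_block_mx [sB _ _ sD] : block_mx B^T (Cm^T)^T Cm^T D^T = block_mx B Cm Cm^T D.
  by rewrite -tr_block_mx.
have HE : block_mx M N (mxconj N) (mxconj M) = 2^-1 *: (Tm C n *m A *m adjmx (Tm C n)).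
  exact: (Hrep rB rC rD sB sD).
set H := block_mx M N (mxconj N) (mxconj M) in HE *.
have adjA : adjmx A = A by rewrite real_adj.
have hH : is_hermitian H.
  by rewrite /is_hermitian HE adjmxZ !adjmxM adjmxK adjA mulmxA conj_half.
have pAc := realpd_complex rA sA pA.
have pH : forall z, z != 0 -> 0 < qf H z.
  move=> z z0; rewrite HE /qf -!scalemxAr -scalemxAl mxE.
  have -> : z *m (Tm C n *m A *m adjmx (Tm C n)) *m adjmx z =
     (z *m Tm C n) *m A *m adjmx (z *m Tm C n) by rewrite adjmxM !mulmxA.
  rewrite mulr_gt0 ?invr_gt0 ?ltr0n //; apply: pAc.
  apply: contra z0 => /eqP zT.
  have := congr1 (mulmx^~ (adjmx (Tm C n))) zT.
  rewrite -mulmxA Tm_adj mul0mx mul_mx_scalar => /eqP.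
  by rewrite scaler_eq0 pnatr_eq0.
have EH : eigs H = eigs A.
  rewrite /eigs.
  have U1 : adjmx (Tm C n) *m (2^-1 *: Tm C n) = 1%:M.
    have h1 : Tm C n *m (2^-1 *: adjmx (Tm C n)) = 1%:M.
      by rewrite -scalemxAr Tm_adj scale_scalar_mx mulVf ?pnatr_eq0.
    by rewrite -scalemxAr scalemxAl; apply: mulmx1C.
  have -> : char_poly H = char_poly A.
    by rewrite HE scalemxAl -(char_poly_sim A U1) scalemxAl.
  by [].
have [hM _ _ _] := herm_blocks hH.
have hS : is_hermitian S := schur_herm hH.
have [pM uMc pS SM] := block_pd hH pH.
have hpd : forall X : 'M[C]_n, is_hermitian X -> (forall w, w != 0 -> 0 < qf X w) ->
    herm_posdef X.
  move=> X hX pX; split => // v v0.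
  have := pX (adjmx v); rewrite /qf adjmxK; apply.
  by apply: contra v0 => /eqP h; rewrite -[v]adjmxK h /adjmx /mxconj map_mx0 trmx0.
have IL : forall k, (k < n)%N -> ((eig A k <= eig M k) && (eig M k <= eig A (k + n))) /\
    ((eig A k <= eig S k) && (eig S k <= eig A (k + n))).
  move=> k kn; have [h1 h2 h3 h4] := interlace hH pH kn.
  by move: h1 h2 h3 h4; rewrite /eig EH => -> -> -> ->.
split; [exact: hH | exact: EH | by split; apply: hpd | exact: IL | ].
have divle : forall a b c d : C, 0 < d -> d <= b -> 0 <= a -> a <= c -> a / b <= c / d.
  move=> a b c d d0 db a0 ac.
  have b0 : 0 < b := lt_le_trans d0 db.
  apply: (@le_trans _ _ (a / d)).
    by apply: ler_wpM2l => //; rewrite lef_pV2 // ?posrE.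
  by apply: ler_wpM2r => //; rewrite invr_ge0 ltW.
have [n0|n0] := posnP n.
  have eM : eigs M = [::].
    by have [_ sz _] := eigs_props hM; apply: size0nil; rewrite sz n0.
  have eS : eigs S = [::].
    by have [_ sz _] := eigs_props hS; apply: size0nil; rewrite sz n0.
  have eA : eigs A = [::].
    by have [_ sz _] := eigs_props hH; apply: size0nil; rewrite -EH sz n0.
  by rewrite /cond /eig eM eS eA !nth_nil; split.
have posA : 0 < eig A 0.
  by rewrite /eig -EH; apply: (eigs_pos hH pH); rewrite addn_gt0 n0.
have e1 : ((n + n).-1 = n.-1 + n)%N by rewrite -subn1 addnC -addnBA ?subn1 //.
have kn : (n.-1 < n)%N by rewrite prednK.
have [/andP [a1 a2] /andP [a3 a4]] := IL _ kn.
have [/andP [b1 b2] /andP [b3 b4]] := IL _ n0.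
split; rewrite /cond e1.
  apply: divle => //; apply: ltW; exact: (eigs_pos hM pM).
apply: divle => //; apply: ltW; exact: (eigs_pos hS pS).
Qed.
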